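(* Let $-\infty\le a<b\le\infty$, let $f,g$ be differentiable on $(a,b)$ with $g'\ne0$ on $(a,b)$, and suppose $\lim_{x\to b^-}f(x)=\lim_{x\to b^-}g(x)=0$. Let $H_{f,g}=\frac{f'}{g'}g-f$ and $H_{f,g}(a^+)=\lim_{x\to a^+}H_{f,g}(x)\in[-\infty,\infty]$. (A) Suppose there is $c\in(a,b)$ such that $f'/g'$ is strictly increasing on $(a,c)$ and strictly decreasing on $(c,b)$. Then: (i) if either $g'>0$ and $H_{f,g}(a^+)\le0$, or $g'<0$ and $H_{f,g}(a^+)\ge0$, then $f/g$ is strictly decreasing on $(a,b)$; (ii) if either $g'>0$ and $H_{f,g}(a^+)>0$, or $g'<0$ and $H_{f,g}(a^+)<0$, then there is a unique $x_b\in(a,b)$ such that $f/g$ is strictly increasing on $(a,x_b)$ and strictly decreasing on $(x_b,b)$. (B) Suppose there is $c\in(a,b)$ such that $f'/g'$ is strictly decreasing on $(a,c)$ and strictly increasing on $(c,b)$. Then: (i) if either $g'>0$ and $H_{f,g}(a^+)\ge0$, or $g'<0$ and $H_{f,g}(a^+)\le0$, then $f/g$ is strictly increasing on $(a,b)$; (ii) if either $g'>0$ and $H_{f,g}(a^+)<0$, or $g'<0$ and $H_{f,g}(a^+)>0$, then there is a unique $x_b\in(a,b)$ such that $f/g$ is strictly decreasing on $(a,x_b)$ and strictly increasing on $(x_b,b)$.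
   Context: $H_{f,g}(x)=\frac{f'(x)}{g'(x)}g(x)-f(x)$ for $x\in(a,b)$, defined for differentiable $f,g$ with $g'\ne0$ on $(a,b)$. *)

(* Defs.v *)
From Stdlib Require Import Reals Lra.
Open Scope R_scope.

Inductive ER : Type := Fin (r : R) | PInf | MInf.

Definition ER_lt (x y : ER) : Prop :=
  match x, y with
  | Fin u, Fin v => u < v
  | MInf, Fin _ | MInf, PInf | Fin _, PInf => True
  | _, _ => False
  end.

Definition ER_le (x y : ER) : Prop := x = y \/ ER_lt x y.

Definition in_ivl (a b : ER) (x : R) : Prop := ER_lt a (Fin x) /\ ER_lt (Fin x) b.

Definition near_left (b : ER) (P : R -> Prop) : Prop :=
  match b with
  | Fin b0 => exists d, 0 < d /\ forall x, b0 - d < x < b0 -> P x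
  | PInf => exists M, forall x, M < x -> P x
  | MInf => True
  end.

Definition near_right (a : ER) (P : R -> Prop) : Prop :=
  match a with
  | Fin a0 => exists d, 0 < d /\ forall x, a0 < x < a0 + d -> P x
  | MInf => exists M, forall x, x < M -> P x
  | PInf => True
  end.

Definition lim_left (f : R -> R) (b : ER) (l : R) : Prop :=
  forall eps, 0 < eps -> near_left b (fun x => Rabs (f x - l) < eps).

Definition lim_right_ext (h : R -> R) (a : ER) (L : ER) : Prop :=
  match L with
  | Fin l => forall eps, 0 < eps -> near_right a (fun x => Rabs (h x - l) < eps)
  | PInf => forall M, near_right a (fun x => M < h x)
  | MInf => forall M, near_right a (fun x => h x < M)
  end.

Definition Hfg (f g f' g' : R -> R) (x : R) : R := f' x / g' x * g x - f x.

Definition strict_incr_on (lo hi : ER) (F : R -> R) : Prop :=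
  forall x y, in_ivl lo hi x -> in_ivl lo hi y -> x < y -> F x < F y.
Definition strict_decr_on (lo hi : ER) (F : R -> R) : Prop :=
  forall x y, in_ivl lo hi x -> in_ivl lo hi y -> x < y -> F y < F x.

(* Main.v *)
Require Import Defs.
From Stdlib Require Import Reals Lra Classical FunctionalExtensionality.
Open Scope R_scope.

Lemma ivl_between lo hi p q t : in_ivl lo hi p -> in_ivl lo hi q -> p <= t <= q -> in_ivl lo hi t.
Proof. unfold in_ivl; destruct lo, hi; simpl; intuition lra. Qed.

Lemma cauchy_mvt (f g f' g' : R -> R) x y :
  x < y -> (forall t, x <= t <= y -> derivable_pt_lim f t (f' t)) ->
  (forall t, x <= t <= y -> derivable_pt_lim g t (g' t)) ->
  exists xi, x < xi < y /\ (g y - g x) * f' xi = (f y - f x) * g' xi.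
Proof.
  intros Hxy Hf Hg.
  assert (pr1 : forall c, x < c < y -> derivable_pt f c).
  { intros c Hc. exists (f' c). apply Hf; lra. }
  assert (pr2 : forall c, x < c < y -> derivable_pt g c).
  { intros c Hc. exists (g' c). apply Hg; lra. }
  destruct (MVT f g x y pr1 pr2 Hxy) as [xi [P E]].
  - intros c Hc. apply derivable_continuous_pt. exists (f' c). apply Hf; lra.
  - intros c Hc. apply derivable_continuous_pt. exists (g' c). apply Hg; lra.
  - exists xi. split; [exact P|].
    rewrite (derive_pt_eq_0 f xi (f' xi)) in E by (apply Hf; lra).
    rewrite (derive_pt_eq_0 g xi (g' xi)) in E by (apply Hg; lra).
    exact E.
Qed.

Lemma mvt1 (f f' : R -> R) x y :
  x < y -> (forall t, x <= t <= y -> derivable_pt_lim f t (f' t)) ->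
  exists xi, x < xi < y /\ f y - f x = f' xi * (y - x).
Proof.
  intros Hxy Hf.
  destruct (cauchy_mvt f id f' (fun _ => 1) x y Hxy Hf) as [xi [H1 H2]].
  - intros t _. apply derivable_pt_lim_id.
  - exists xi. split; [exact H1|]. unfold id in H2. lra.
Qed.

Lemma decr_from_deriv lo hi (Q D : R -> R) e :
  (forall x, in_ivl lo hi x -> derivable_pt_lim Q x (D x)) ->
  (forall x, in_ivl lo hi x -> x <> e -> D x < 0) ->
  strict_decr_on lo hi Q.
Proof.
  intros Hd Hn.
  assert (K : forall x y, in_ivl lo hi x -> in_ivl lo hi y -> x < y -> ~ (x < e < y) -> Q y < Q x).
  { intros x y Hx Hy Hxy He.
    destruct (mvt1 Q D x y Hxy) as [xi [Hxi E]].
    - intros t Ht. apply Hd. apply (ivl_between lo hi x y); auto.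
    - assert (D xi < 0). { apply Hn. apply (ivl_between lo hi x y); auto; lra.
        intro; subst; apply He; lra. }
      nra. }
  intros x y Hx Hy Hxy.
  destruct (Rlt_dec x e); destruct (Rlt_dec e y).
  - assert (Hc : in_ivl lo hi e) by (apply (ivl_between lo hi x y); auto; lra).
    assert (Q e < Q x) by (apply K; auto; lra).
    assert (Q y < Q e) by (apply K; auto; lra). lra.
  - apply K; auto; lra.
  - apply K; auto; lra.
  - apply K; auto; lra.
Qed.

Lemma incr_from_deriv lo hi (Q D : R -> R) e :
  (forall x, in_ivl lo hi x -> derivable_pt_lim Q x (D x)) ->
  (forall x, in_ivl lo hi x -> x <> e -> 0 < D x) ->
  strict_incr_on lo hi Q.
Proof.
  intros Hd Hn x y Hx Hy Hxy.
  assert (strict_decr_on lo hi (fun x => - Q x)).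
  { apply (decr_from_deriv lo hi _ (fun x => - D x) e).
    - intros z Hz. apply (derivable_pt_lim_opp Q). auto.
    - intros z Hz Hne. specialize (Hn z Hz Hne). lra. }
  specialize (H x y Hx Hy Hxy). simpl in H. lra.
Qed.

Lemma near_left_pick b P m : near_left b P -> ER_lt (Fin m) b ->
  exists y, m < y /\ ER_lt (Fin y) b /\ P y.
Proof.
  destruct b as [b0| |]; simpl.
  - intros [d [Hd HP]] Hm. exists ((Rmax m (b0 - d) + b0) / 2).
    pose proof (Rmax_l m (b0-d)); pose proof (Rmax_r m (b0-d)).
    assert (Rmax m (b0-d) < b0) by (apply Rmax_lub_lt; lra).
    repeat split; try lra. apply HP; lra.
  - intros [M HP] _. exists (Rmax m M + 1).
    pose proof (Rmax_l m M); pose proof (Rmax_r m M).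
    repeat split; try lra; auto. apply HP; lra.
  - intros _ [].
Qed.

Lemma near_right_pick a P z : near_right a P -> ER_lt a (Fin z) ->
  exists w, ER_lt a (Fin w) /\ w < z /\ P w.
Proof.
  destruct a as [a0| |]; simpl.
  - intros [d [Hd HP]] Hm. exists ((Rmin z (a0 + d) + a0) / 2).
    pose proof (Rmin_l z (a0+d)); pose proof (Rmin_r z (a0+d)).
    assert (a0 < Rmin z (a0+d)) by (apply Rmin_glb_lt; lra).
    repeat split; try lra. apply HP; lra.
  - intros _ [].
  - intros [M HP] _. exists (Rmin z M - 1).
    pose proof (Rmin_l z M); pose proof (Rmin_r z M).
    repeat split; try lra; auto. apply HP; lra.
Qed.

Lemma near_left_and b P Q : near_left b P -> near_left b Q -> near_left b (fun x => P x /\ Q x).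
Proof.
  destruct b as [b0| |]; simpl; auto.
  - intros [d1 [H1 P1]] [d2 [H2 P2]]. exists (Rmin d1 d2). split.
    + apply Rmin_glb_lt; auto.
    + intros x Hx. pose proof (Rmin_l d1 d2); pose proof (Rmin_r d1 d2).
      split; [apply P1|apply P2]; lra.
  - intros [M1 P1] [M2 P2]. exists (Rmax M1 M2). intros x Hx.
    pose proof (Rmax_l M1 M2); pose proof (Rmax_r M1 M2).
    split; [apply P1|apply P2]; lra.
Qed.

Lemma ERa_mono a p q : ER_lt a (Fin p) -> p <= q -> ER_lt a (Fin q).
Proof. destruct a; simpl; intros; auto; lra. Qed.
Lemma ERb_mono b p q : ER_lt (Fin p) b -> q <= p -> ER_lt (Fin q) b.
Proof. destruct b; simpl; intros; auto; lra. Qed.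

Ltac iv := unfold in_ivl in *; simpl in *; repeat split; try lra; try tauto.

Lemma core (a b : ER) (f g f' g' h : R -> R) (L : ER) (c : R) :
  (forall x, in_ivl a b x -> derivable_pt_lim f x (f' x)) ->
  (forall x, in_ivl a b x -> derivable_pt_lim g x (g' x)) ->
  (forall x, in_ivl a b x -> 0 < g' x) ->
  lim_left f b 0 -> lim_left g b 0 ->
  (forall x, in_ivl a b x -> h x = Hfg f g f' g' x) ->
  lim_right_ext h a L ->
  in_ivl a b c ->
  strict_incr_on a (Fin c) (fun x => f' x / g' x) ->
  strict_decr_on (Fin c) b (fun x => f' x / g' x) ->
  (ER_le L (Fin 0) -> strict_decr_on a b (fun x => f x / g x)) /\
  (ER_lt (Fin 0) L -> exists! xb, in_ivl a b xb /\
        strict_incr_on a (Fin xb) (fun x => f x / g x) /\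
        strict_decr_on (Fin xb) b (fun x => f x / g x)).
Proof.
  intros Hf Hg Hpos limf limg Hh HL Hc Hinc Hdec.
  set (r := fun x => f' x / g' x) in *.
  set (H := Hfg f g f' g') in *.
  assert (HH : forall x, H x = r x * g x - f x) by reflexivity.
  assert (ginc : strict_incr_on a b g).
  { apply (incr_from_deriv a b g g' 0); auto. }
  assert (gneg : forall x, in_ivl a b x -> g x < 0).
  { intros x Hx. destruct (Rlt_or_le (g x) 0) as [|Hge]; auto. exfalso.
    destruct (near_left_pick b _ x (limg 1 Rlt_0_1) (proj2 Hx)) as [m [Hm1 [Hm2 _]]].
    assert (Hmi : in_ivl a b m) by (split; [apply (ERa_mono a x); [apply Hx|lra] | auto]).
    assert (Hgm : g x < g m) by (apply ginc; auto).
    destruct (near_left_pick b _ m (limg (g m) ltac:(lra)) Hm2) as [y [Hy1 [Hy2 Hy3]]].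
    assert (Hyi : in_ivl a b y) by (split; [apply (ERa_mono a m); [apply Hmi|lra] | auto]).
    assert (g m < g y) by (apply ginc; auto).
    apply Rabs_def2 in Hy3. lra. }
  assert (cau : forall x y, in_ivl a b x -> in_ivl a b y -> x < y ->
     exists xi, x < xi < y /\ f y - f x = r xi * (g y - g x)).
  { intros x y Hx Hy Hxy.
    destruct (cauchy_mvt f g f' g' x y Hxy) as [xi [Hxi E]].
    - intros t Ht. apply Hf. apply (ivl_between a b x y); auto.
    - intros t Ht. apply Hg. apply (ivl_between a b x y); auto.
    - exists xi. split; auto.
      assert (Hxii : in_ivl a b xi) by (apply (ivl_between a b x y); auto; lra).
      specialize (Hpos xi Hxii). unfold r.
      apply (Rmult_eq_reg_r (g' xi)); [|lra].
      field_simplify; [|lra]. lra. }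
  assert (Hright : forall x, in_ivl a b x -> c < x -> H x < 0).
  { intros x Hx Hcx.
    destruct (near_left_pick b _ x (limf 1 Rlt_0_1) (proj2 Hx)) as [m [Hm1 [Hm2 _]]].
    assert (Hmi : in_ivl a b m) by (split; [apply (ERa_mono a x); [apply Hx|lra] | auto]).
    assert (Hm0 : H m <= 0).
    { destruct (Rle_or_lt (H m) 0) as [|Hp]; auto. exfalso.
      assert (key : forall y, in_ivl a b y -> m < y -> f y - r m * g y < - H m).
      { intros y Hy Hmy. destruct (cau m y Hmi Hy Hmy) as [xi [Hxi E]].
        assert (Hxii : in_ivl a b xi) by (apply (ivl_between a b m y); auto; lra).
        assert (r xi < r m) by (apply Hdec; iv).
        assert (g m < g y) by (apply ginc; auto).
        rewrite HH. nra. }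
      set (e2 := H m / (2 * (Rabs (r m) + 1))).
      pose proof (Rabs_pos (r m)).
      assert (He2 : 0 < e2) by (unfold e2; apply Rdiv_lt_0_compat; lra).
      assert (He2' : e2 * (Rabs (r m) + 1) = H m / 2) by (unfold e2; field; lra).
      destruct (near_left_pick b _ m (near_left_and b _ _ (limf (H m / 2) ltac:(lra)) (limg e2 He2)) Hm2)
        as [y [Hy1 [Hy2 [Hy3 Hy4]]]].
      assert (Hyi : in_ivl a b y) by (split; [apply (ERa_mono a m); [apply Hmi|lra] | auto]).
      specialize (key y Hyi Hy1).
      rewrite Rminus_0_r in Hy3, Hy4.
      assert (Rabs (r m * g y) < H m / 2).
      { rewrite Rabs_mult. pose proof (Rabs_pos (g y)). nra. }
      apply Rabs_def2 in Hy3. apply Rabs_def2 in H1. lra. }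
    destruct (cau x m Hx Hmi Hm1) as [xi [Hxi E]].
    assert (Hxii : in_ivl a b xi) by (apply (ivl_between a b x m); auto; lra).
    assert (r xi < r x) by (apply Hdec; iv).
    assert (r m < r x) by (apply Hdec; iv).
    assert (g x < g m) by (apply ginc; auto).
    assert (g m < 0) by auto.
    rewrite HH in Hm0 |- *. nra. }
  assert (Hleft : forall x y, in_ivl a b x -> in_ivl a b y -> x < y -> y < c -> H y < H x).
  { intros x y Hx Hy Hxy Hyc. destruct (cau x y Hx Hy Hxy) as [xi [Hxi E]].
    assert (Hxii : in_ivl a b xi) by (apply (ivl_between a b x y); auto; lra).
    assert (r x < r xi) by (apply Hinc; iv).
    assert (r xi < r y) by (apply Hinc; iv).
    pose proof (gneg x Hx); pose proof (gneg y Hy).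
    assert ((r y - r xi) * g y < 0) by nra.
    assert ((r xi - r x) * g x < 0) by nra.
    rewrite !HH. nra. }
  set (D := fun x => (f' x * g x - g' x * f x) / (g x)²).
  assert (QD : forall x, in_ivl a b x -> derivable_pt_lim (fun x => f x / g x) x (D x)).
  { intros x Hx. pose proof (gneg x Hx).
    apply (derivable_pt_lim_div f g x (f' x) (g' x)); auto; lra. }
  assert (Dsign : forall x, in_ivl a b x -> (H x < 0 -> D x < 0) /\ (0 < H x -> 0 < D x)).
  { intros x Hx. pose proof (gneg x Hx). pose proof (Hpos x Hx).
    assert (E : f' x * g x - g' x * f x = g' x * H x) by (rewrite HH; unfold r; field; lra).
    unfold D. rewrite E. unfold Rsqr.
    assert (0 < / (g x * g x)) by (apply Rinv_0_lt_compat; nra).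
    unfold Rdiv. split; intro.
    - assert (g' x * H x < 0) by nra. nra.
    - assert (0 < g' x * H x) by nra. nra. }
  assert (ac : ER_lt a (Fin c)) by apply Hc.
  split.
  - intros HLe.
    assert (Hl : forall x, in_ivl a b x -> x < c -> H x < 0).
    { intros x Hx Hxc. destruct (Rlt_or_le (H x) 0) as [|Hge]; auto. exfalso.
      destruct (near_right_pick a (fun _ => True) x) as [z [Hz1 [Hz2 _]]].
      { destruct a as [a0| |]; simpl; auto. exists 1; split; auto; lra. exists 0; auto. }
      { apply Hx. }
      assert (Hzi : in_ivl a b z) by (split; auto; apply (ERb_mono b x); [apply Hx|lra]).
      assert (Hzx : H x < H z) by (apply Hleft; auto).
      assert (Hw : forall w, in_ivl a b w -> w < z -> H z < H w) by (intros; apply Hleft; auto; lra).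
      destruct HLe as [-> | HLt].
      + destruct (near_right_pick a _ z (HL (H z) ltac:(lra)) Hz1) as [w [Hw1 [Hw2 Hw3]]].
        assert (Hwi : in_ivl a b w) by (split; auto; apply (ERb_mono b z); [apply Hzi|lra]).
        specialize (Hw w Hwi Hw2). rewrite Hh in Hw3 by auto. fold H in Hw3.
        apply Rabs_def2 in Hw3. lra.
      + destruct L as [l| |]; simpl in HLt; try tauto.
        * destruct (near_right_pick a _ z (HL (H z) ltac:(lra)) Hz1) as [w [Hw1 [Hw2 Hw3]]].
          assert (Hwi : in_ivl a b w) by (split; auto; apply (ERb_mono b z); [apply Hzi|lra]).
          specialize (Hw w Hwi Hw2). rewrite Hh in Hw3 by auto. fold H in Hw3.
          apply Rabs_def2 in Hw3. lra.
        * destruct (near_right_pick a _ z (HL (H z)) Hz1) as [w [Hw1 [Hw2 Hw3]]].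
          assert (Hwi : in_ivl a b w) by (split; auto; apply (ERb_mono b z); [apply Hzi|lra]).
          specialize (Hw w Hwi Hw2). rewrite Hh in Hw3 by auto. fold H in Hw3. lra. }
    apply (decr_from_deriv a b _ D c QD).
    intros x Hx Hne. apply Dsign; auto.
    destruct (Rlt_or_le x c); [apply Hl; auto | apply Hright; auto; lra].
  - intros HLt.
    assert (Hz : exists z, ER_lt a (Fin z) /\ z < c /\ 0 < H z).
    { destruct L as [l| |]; simpl in HLt; try tauto.
      - destruct (near_right_pick a _ c (HL l HLt) ac) as [w [Hw1 [Hw2 Hw3]]].
        exists w. repeat split; auto.
        rewrite <- Hh by (split; auto; apply (ERb_mono b c); [apply Hc|lra]).
        apply Rabs_def2 in Hw3. lra.
      - destruct (near_right_pick a _ c (HL 0) ac) as [w [Hw1 [Hw2 Hw3]]].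
        exists w. repeat split; auto.
        rewrite <- Hh by (split; auto; apply (ERb_mono b c); [apply Hc|lra]). auto. }
    set (E := fun x => ER_lt a (Fin x) /\ x < c /\ 0 < H x).
    assert (bE : bound E) by (exists c; intros y [_ [Hy _]]; lra).
    destruct (completeness E bE Hz) as [x0 [Hub Hlub]].
    destruct Hz as [z0 Hz0].
    assert (z0x0 : z0 <= x0) by (apply Hub; exact Hz0).
    assert (x0c : x0 <= c) by (apply Hlub; intros y [_ [Hy _]]; lra).
    assert (Hx0 : in_ivl a b x0).
    { split. apply (ERa_mono a z0); [apply Hz0|lra]. apply (ERb_mono b c); [apply Hc|lra]. }
    assert (inab_l : forall x, in_ivl a (Fin x0) x -> in_ivl a b x).
    { intros x [H1 H2]. simpl in H2. split; auto. apply (ERb_mono b x0); [apply Hx0|lra]. }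
    assert (inab_r : forall x, in_ivl (Fin x0) b x -> in_ivl a b x).
    { intros x [H1 H2]. simpl in H1. split; auto. apply (ERa_mono a x0); [apply Hx0|lra]. }
    assert (Pos : forall x, in_ivl a b x -> x < x0 -> 0 < H x).
    { intros x Hx Hxx0.
      destruct (classic (exists s, E s /\ x < s)) as [[s [Es Hxs]] | Hno].
      - destruct Es as [Es1 [Es2 Es3]].
        assert (Hsi : in_ivl a b s) by (split; auto; apply (ERb_mono b c); [apply Hc|lra]).
        assert (H s < H x) by (apply Hleft; auto). lra.
      - exfalso. assert (x0 <= x).
        { apply Hlub. intros y Ey. destruct (Rle_or_lt y x); auto. exfalso; apply Hno; eauto. }
        lra. }
    assert (Neg : forall x, in_ivl a b x -> x0 < x -> x < c -> H x < 0).
    { intros x Hx Hx0x Hxc. destruct (Rlt_or_le (H x) 0) as [|Hge]; auto. exfalso.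
      set (y := (x0 + x) / 2).
      assert (Hyi : in_ivl a b y) by (apply (ivl_between a b x0 x); auto; unfold y; lra).
      assert (H x < H y) by (apply Hleft; auto; unfold y; lra).
      assert (E y) by (split; [apply Hyi|]; split; [unfold y; lra | lra]).
      assert (y <= x0) by (apply Hub; auto). unfold y in *. lra. }
    assert (Qinc : strict_incr_on a (Fin x0) (fun x => f x / g x)).
    { apply (incr_from_deriv _ _ _ D c).
      - intros x Hx. apply QD; auto.
      - intros x Hx _. apply Dsign; auto. apply Pos; auto. apply Hx. }
    assert (Qdec : strict_decr_on (Fin x0) b (fun x => f x / g x)).
    { apply (decr_from_deriv _ _ _ D c).
      - intros x Hx. apply QD; auto.
      - intros x Hx Hne. apply Dsign; auto. destruct Hx as [Hx1 Hx2]; simpl in Hx1.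
        destruct (Rlt_or_le x c).
        + apply Neg; auto. split; auto. apply (ERa_mono a x0); [apply Hx0|lra].
        + apply Hright. split; auto. apply (ERa_mono a x0); [apply Hx0|lra]. lra. }
    exists x0. split; [split; auto|].
    intros x1 [Hx1 [Inc1 Dec1]].
    destruct (Rtotal_order x0 x1) as [Hlt | [Heq | Hgt]]; auto; exfalso.
    + set (p := x0 + (x1 - x0) / 3). set (q := x0 + 2 * (x1 - x0) / 3).
      assert (Hp : in_ivl a b p) by (apply (ivl_between a b x0 x1); auto; unfold p; lra).
      assert (Hq : in_ivl a b q) by (apply (ivl_between a b x0 x1); auto; unfold q; lra).
      assert (f p / g p < f q / g q).
      { apply Inc1; [split; [apply Hp|] | split; [apply Hq|] |]; simpl; unfold p, q; lra. }
      assert (f q / g q < f p / g p).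
      { apply Qdec; [split; [|apply Hp] | split; [|apply Hq] |]; simpl; unfold p, q; lra. }
      lra.
    + set (p := x1 + (x0 - x1) / 3). set (q := x1 + 2 * (x0 - x1) / 3).
      assert (Hp : in_ivl a b p) by (apply (ivl_between a b x1 x0); auto; unfold p; lra).
      assert (Hq : in_ivl a b q) by (apply (ivl_between a b x1 x0); auto; unfold q; lra).
      assert (f p / g p < f q / g q).
      { apply Qinc; [split; [apply Hp|] | split; [apply Hq|] |]; simpl; unfold p, q; lra. }
      assert (f q / g q < f p / g p).
      { apply Dec1; [split; [|apply Hp] | split; [|apply Hq] |]; simpl; unfold p, q; lra. }
      lra.
Qed.

Definition ER_neg (L : ER) : ER := match L with Fin l => Fin (- l) | PInf => MInf | MInf => PInf end.

Lemma near_right_impl a (P Q : R -> Prop) : (forall x, P x -> Q x) -> near_right a P -> near_right a Q.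
Proof. destruct a; simpl; auto; firstorder. Qed.
Lemma near_left_impl b (P Q : R -> Prop) : (forall x, P x -> Q x) -> near_left b P -> near_left b Q.
Proof. destruct b; simpl; auto; firstorder. Qed.

Lemma lim_left_opp f b : lim_left f b 0 -> lim_left (fun x => - f x) b 0.
Proof.
  intros H e He. eapply (near_left_impl b _ _); [|exact (H e He)]. intros x Hx.
  simpl in Hx |- *. rewrite !Rminus_0_r in *. rewrite Rabs_Ropp. exact Hx.
Qed.

Lemma lim_right_opp h a L : lim_right_ext h a L -> lim_right_ext (fun x => - h x) a (ER_neg L).
Proof.
  destruct L as [l| |]; simpl; intros H.
  - intros e He. eapply (near_right_impl a _ _); [|exact (H e He)]. intros x Hx.
    replace (- h x - - l) with (- (h x - l)) by ring. rewrite Rabs_Ropp. exact Hx.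
  - intros M. eapply (near_right_impl a _ _); [|exact (H (- M))]. intros x Hx. lra.
  - intros M. eapply (near_right_impl a _ _); [|exact (H (- M))]. intros x Hx. lra.
Qed.

Lemma incr_opp lo hi F : strict_incr_on lo hi F -> strict_decr_on lo hi (fun x => - F x).
Proof. intros H x y Hx Hy Hxy. specialize (H x y Hx Hy Hxy). lra. Qed.
Lemma decr_opp lo hi F : strict_decr_on lo hi F -> strict_incr_on lo hi (fun x => - F x).
Proof. intros H x y Hx Hy Hxy. specialize (H x y Hx Hy Hxy). lra. Qed.
Lemma incr_opp' lo hi F : strict_incr_on lo hi (fun x => - F x) -> strict_decr_on lo hi F.
Proof. intros H x y Hx Hy Hxy. specialize (H x y Hx Hy Hxy). simpl in H. lra. Qed.
Lemma decr_opp' lo hi F : strict_decr_on lo hi (fun x => - F x) -> strict_incr_on lo hi F.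
Proof. intros H x y Hx Hy Hxy. specialize (H x y Hx Hy Hxy). simpl in H. lra. Qed.

Lemma neg_le0 L : ER_le (Fin 0) L -> ER_le (ER_neg L) (Fin 0).
Proof. unfold ER_le; destruct L; simpl; intros [E|E]; try discriminate; try tauto.
  - inversion E; left; f_equal; ring.
  - right; lra. Qed.
Lemma neg_le0' L : ER_le L (Fin 0) -> ER_le (Fin 0) (ER_neg L).
Proof. unfold ER_le; destruct L; simpl; intros [E|E]; try discriminate; try tauto.
  - inversion E; left; f_equal; ring.
  - right; lra. Qed.
Lemma neg_lt0 L : ER_lt L (Fin 0) -> ER_lt (Fin 0) (ER_neg L).
Proof. destruct L; simpl; auto; lra. Qed.
Lemma neg_lt0' L : ER_lt (Fin 0) L -> ER_lt (ER_neg L) (Fin 0).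
Proof. destruct L; simpl; auto; lra. Qed.

Lemma Hfg_opp f g f' g' :
  Hfg (fun x => - f x) (fun x => - g x) (fun x => - f' x) (fun x => - g' x) = (fun x => - Hfg f g f' g' x).
Proof. apply functional_extensionality; intro x. unfold Hfg, Rdiv. rewrite Rinv_opp. ring. Qed.
Lemma Hfg_oppf f g f' g' :
  Hfg (fun x => - f x) g (fun x => - f' x) g' = (fun x => - Hfg f g f' g' x).
Proof. apply functional_extensionality; intro x. unfold Hfg, Rdiv. ring. Qed.
Lemma Hfg_oppg f g f' g' :
  Hfg f (fun x => - g x) f' (fun x => - g' x) = Hfg f g f' g'.
Proof. apply functional_extensionality; intro x. unfold Hfg, Rdiv. rewrite Rinv_opp. ring. Qed.
Lemma div_oo (u v : R -> R) : (fun x => - u x / - v x) = (fun x => u x / v x).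
Proof. apply functional_extensionality; intro x. unfold Rdiv. rewrite Rinv_opp. ring. Qed.
Lemma div_o1 (u v : R -> R) : (fun x => - u x / v x) = (fun x => - (u x / v x)).
Proof. apply functional_extensionality; intro x. unfold Rdiv. ring. Qed.
Lemma div_o2 (u v : R -> R) : (fun x => u x / - v x) = (fun x => - (u x / v x)).
Proof. apply functional_extensionality; intro x. unfold Rdiv. rewrite Rinv_opp. ring. Qed.

Section S.
Variables (a b : ER) (f g f' g' : R -> R) (L : ER) (c : R).
Hypotheses (Hf : forall x, in_ivl a b x -> derivable_pt_lim f x (f' x))
  (Hg : forall x, in_ivl a b x -> derivable_pt_lim g x (g' x))
  (limf : lim_left f b 0) (limg : lim_left g b 0)
  (HL : lim_right_ext (Hfg f g f' g') a L) (Hc : in_ivl a b c).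

Lemma Hfo : forall x, in_ivl a b x -> derivable_pt_lim (fun x => - f x) x (- f' x).
Proof. intros x Hx. apply (derivable_pt_lim_opp f). auto. Qed.
Lemma Hgo : forall x, in_ivl a b x -> derivable_pt_lim (fun x => - g x) x (- g' x).
Proof. intros x Hx. apply (derivable_pt_lim_opp g). auto. Qed.

Lemma A_neg :
  (forall x, in_ivl a b x -> g' x < 0) ->
  strict_incr_on a (Fin c) (fun x => f' x / g' x) ->
  strict_decr_on (Fin c) b (fun x => f' x / g' x) ->
  (ER_le (Fin 0) L -> strict_decr_on a b (fun x => f x / g x)) /\
  (ER_lt L (Fin 0) -> exists! xb, in_ivl a b xb /\
        strict_incr_on a (Fin xb) (fun x => f x / g x) /\
        strict_decr_on (Fin xb) b (fun x => f x / g x)).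
Proof.
  intros Hn Hi Hd.
  pose proof (core a b (fun x => - f x) (fun x => - g x) (fun x => - f' x) (fun x => - g' x)
    (fun x => - Hfg f g f' g' x) (ER_neg L) c Hfo Hgo
    ltac:(intros x Hx; specialize (Hn x Hx); lra) (lim_left_opp _ _ limf) (lim_left_opp _ _ limg)
    ltac:(intros x _; rewrite Hfg_opp; reflexivity) (lim_right_opp _ _ _ HL) Hc) as K.
  cbv beta in K; rewrite !div_oo in K. specialize (K Hi Hd). destruct K as [K1 K2]. split.
  - intro; apply K1; apply neg_le0; auto.
  - intro; apply K2; apply neg_lt0; auto.
Qed.

Lemma B_pos :
  (forall x, in_ivl a b x -> 0 < g' x) ->
  strict_decr_on a (Fin c) (fun x => f' x / g' x) ->
  strict_incr_on (Fin c) b (fun x => f' x / g' x) ->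
  (ER_le (Fin 0) L -> strict_incr_on a b (fun x => f x / g x)) /\
  (ER_lt L (Fin 0) -> exists! xb, in_ivl a b xb /\
        strict_decr_on a (Fin xb) (fun x => f x / g x) /\
        strict_incr_on (Fin xb) b (fun x => f x / g x)).
Proof.
  intros Hp Hd Hi.
  pose proof (core a b (fun x => - f x) g (fun x => - f' x) g'
    (fun x => - Hfg f g f' g' x) (ER_neg L) c Hfo Hg Hp (lim_left_opp _ _ limf) limg
    ltac:(intros x _; rewrite Hfg_oppf; reflexivity) (lim_right_opp _ _ _ HL) Hc) as K.
  cbv beta in K; rewrite !div_o1 in K. specialize (K (decr_opp _ _ _ Hd) (incr_opp _ _ _ Hi)).
  destruct K as [K1 K2]. split.
  - intro. apply decr_opp'. apply K1; apply neg_le0; auto.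
  - intro HL0. destruct (K2 (neg_lt0 _ HL0)) as [x0 [[P1 [P2 P3]] U]].
    exists x0. split; [split; [auto | split; [apply incr_opp'; auto | apply decr_opp'; auto]]|].
    intros x1 [Q1 [Q2 Q3]]. apply U. split; [auto | split; [apply decr_opp; auto | apply incr_opp; auto]].
Qed.

Lemma B_neg :
  (forall x, in_ivl a b x -> g' x < 0) ->
  strict_decr_on a (Fin c) (fun x => f' x / g' x) ->
  strict_incr_on (Fin c) b (fun x => f' x / g' x) ->
  (ER_le L (Fin 0) -> strict_incr_on a b (fun x => f x / g x)) /\
  (ER_lt (Fin 0) L -> exists! xb, in_ivl a b xb /\
        strict_decr_on a (Fin xb) (fun x => f x / g x) /\
        strict_incr_on (Fin xb) b (fun x => f x / g x)).
Proof.
  intros Hn Hd Hi.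
  pose proof (core a b f (fun x => - g x) f' (fun x => - g' x)
    (Hfg f g f' g') L c Hf Hgo
    ltac:(intros x Hx; specialize (Hn x Hx); lra) limf (lim_left_opp _ _ limg)
    ltac:(intros x _; rewrite Hfg_oppg; reflexivity) HL Hc) as K.
  cbv beta in K; rewrite !div_o2 in K. specialize (K (decr_opp _ _ _ Hd) (incr_opp _ _ _ Hi)).
  destruct K as [K1 K2]. split.
  - intro. apply decr_opp'. apply K1; auto.
  - intro HL0. destruct (K2 HL0) as [x0 [[P1 [P2 P3]] U]].
    exists x0. split; [split; [auto | split; [apply incr_opp'; auto | apply decr_opp'; auto]]|].
    intros x1 [Q1 [Q2 Q3]]. apply U. split; [auto | split; [apply decr_opp; auto | apply incr_opp; auto]].
Qed.
End S.
Theorem mainTheorem4 (a b : ER) (f g f' g' : R -> R) :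
  ER_lt a b ->
  (forall x, in_ivl a b x -> derivable_pt_lim f x (f' x)) ->
  (forall x, in_ivl a b x -> derivable_pt_lim g x (g' x)) ->
  (forall x, in_ivl a b x -> g' x <> 0) ->
  lim_left f b 0 -> lim_left g b 0 ->
  forall L : ER, lim_right_ext (Hfg f g f' g') a L ->
  (* (A) *)
  ((exists c, in_ivl a b c /\
      strict_incr_on a (Fin c) (fun x => f' x / g' x) /\
      strict_decr_on (Fin c) b (fun x => f' x / g' x)) ->
    (((forall x, in_ivl a b x -> 0 < g' x) /\ ER_le L (Fin 0) \/
      (forall x, in_ivl a b x -> g' x < 0) /\ ER_le (Fin 0) L) ->
      strict_decr_on a b (fun x => f x / g x)) /\
    (((forall x, in_ivl a b x -> 0 < g' x) /\ ER_lt (Fin 0) L \/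
      (forall x, in_ivl a b x -> g' x < 0) /\ ER_lt L (Fin 0)) ->
      exists! xb, in_ivl a b xb /\
        strict_incr_on a (Fin xb) (fun x => f x / g x) /\
        strict_decr_on (Fin xb) b (fun x => f x / g x))) /\
  (* (B) *)
  ((exists c, in_ivl a b c /\
      strict_decr_on a (Fin c) (fun x => f' x / g' x) /\
      strict_incr_on (Fin c) b (fun x => f' x / g' x)) ->
    (((forall x, in_ivl a b x -> 0 < g' x) /\ ER_le (Fin 0) L \/
      (forall x, in_ivl a b x -> g' x < 0) /\ ER_le L (Fin 0)) ->
      strict_incr_on a b (fun x => f x / g x)) /\
    (((forall x, in_ivl a b x -> 0 < g' x) /\ ER_lt L (Fin 0) \/
      (forall x, in_ivl a b x -> g' x < 0) /\ ER_lt (Fin 0) L) ->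
      exists! xb, in_ivl a b xb /\
        strict_decr_on a (Fin xb) (fun x => f x / g x) /\
        strict_incr_on (Fin xb) b (fun x => f x / g x))).
Proof.
  intros Hab Hf Hg Hne limf limg L HL. split.
  - intros [c [Hc [Hi Hd]]]. split.
    + intros [[Hp HL0] | [Hn HL0]].
      * exact (proj1 (core a b f g f' g' _ L c Hf Hg Hp limf limg (fun _ _ => eq_refl) HL Hc Hi Hd) HL0).
      * exact (proj1 (A_neg a b f g f' g' L c Hf Hg limf limg HL Hc Hn Hi Hd) HL0).
    + intros [[Hp HL0] | [Hn HL0]].
      * exact (proj2 (core a b f g f' g' _ L c Hf Hg Hp limf limg (fun _ _ => eq_refl) HL Hc Hi Hd) HL0).
      * exact (proj2 (A_neg a b f g f' g' L c Hf Hg limf limg HL Hc Hn Hi Hd) HL0).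
  - intros [c [Hc [Hd Hi]]]. split.
    + intros [[Hp HL0] | [Hn HL0]].
      * exact (proj1 (B_pos a b f g f' g' L c Hf Hg limf limg HL Hc Hp Hd Hi) HL0).
      * exact (proj1 (B_neg a b f g f' g' L c Hf Hg limf limg HL Hc Hn Hd Hi) HL0).
    + intros [[Hp HL0] | [Hn HL0]].
      * exact (proj2 (B_pos a b f g f' g' L c Hf Hg limf limg HL Hc Hp Hd Hi) HL0).
      * exact (proj2 (B_neg a b f g f' g' L c Hf Hg limf limg HL Hc Hn Hd Hi) HL0).
Qed.
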